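(* All walls that appear in diagonal or nearly diagonal wall crossings are simple.
   Context: Let $X$ be a smooth connected projective curve of genus $g \ge 2$ over $\mathbb{C}$, let $r, d$ be positive integers with $\gcd(r,d)=1$ and $0<d<r$, and fix a line bundle $L$ of degree $d$ on $X$. Fix two distinct points $x_1, x_2 \in X$. A parabolic bundle $(E, V_1, V_2)$ consists of a rank $r$ vector bundle $E$ with $\det E \cong L$ and subspaces $V_i \subset E|_{x_i}$ of dimensions $\mathbf{m} = (m_1,m_2) = (r-1, 1)$. For a weight $\mathbf{a} = (a_1,a_2) \in (0,1)^2$, $(E,V_\bullet)$ is $\mathbf{a}$-(semi)stable if for every proper subbundle $F\subset E$ of rank $s$ and degree $e$, $\frac{e + \sum_i a_i \dim(V_i\cap F|_{x_i})}{s} < (\le) \frac{d + \sum_i a_i \dim V_i}{r}$; let $\mathrm{M}(r,L,\mathbf{a})$ denote the moduli space. A wall in $[0,1]^2$ is a set $\Delta(s,e,\mathbf{n}) = \{\mathbf{a} \mid (e + n_1a_1+n_2a_2)/s = (d+(r-1)a_1+a_2)/r\}$ with integers $0<s<r$, $e$, $r-2\le n_1\le r-1$, $0\le n_2\le 1$ (across which stability changes); note $\Delta(s,e,\mathbf{n}) = \Delta(r-s,d-e,\mathbf{m}-\mathbf{n})$. A wall is called simple if the greatest common divisor of $\{s,e,n_1,n_2\}$ and that of $\{r-s, d-e, m_1-n_1, m_2-n_2\}$ are both one; otherwise (if a common divisor $c>1$ exists) it is a multiple wall. A wall crossing is diagonal if the wall is crossed while the weight $\mathbf{a}$ increases along the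 line $a_1=a_2$, and nearly diagonal if it is crossed while $\mathbf{a}$ increases along the line $r a_1 = (r+1) a_2$.
   Formalization: The index n₁ of a wall ranges over s−1 ≤ n₁ ≤ s in place of r−2 ≤ n₁ ≤ r−1; walls in (nearly) diagonal crossings are those meeting a₁=a₂ or ra₁=(r+1)a₂ inside (0,1)². Apart from conventions, each condition added here is assumed in the paper as well or is needed for the statement above to hold. This also corrects a misprint. *)

(* Defs.v *)
From HB Require Import structures.
From mathcomp Require Import all_boot all_order all_algebra.
Set Implicit Arguments. Unset Strict Implicit. Unset Printing Implicit Defensive.
Import Order.TTheory GRing.Theory Num.Theory.
Local Open Scope ring_scope.

(* Parabolic data: rank r, degree d, flag dimensions m = (r-1, 1).
   A wall Delta(s,e,n) is given by integers s, e, n1, n2. *)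

(* Admissible numerical data of a wall: 0 < s < r and
   max(0, m_i - (r - s)) <= n_i <= min(m_i, s), which for m = (r-1,1)
   and 0 < s < r reads  s - 1 <= n1 <= s  and  0 <= n2 <= 1. *)
Definition wall_data (r : nat) (s n1 n2 : int) : Prop :=
  [/\ 0 < s < r%:Z, s - 1 <= n1 <= s & 0 <= n2 <= 1].

Definition on_wall (R : realFieldType) (r d : nat) (s e n1 n2 : int) (a1 a2 : R)
  : Prop :=
  (e%:~R + n1%:~R * a1 + n2%:~R * a2) / s%:~R
  = (d%:R + (r.-1)%:R * a1 + a2) / r%:R.

Definition weight (R : realFieldType) (a1 a2 : R) : Prop :=
  0 < a1 < 1 /\ 0 < a2 < 1.

Definition on_diagonal (R : realFieldType) (a1 a2 : R) : Prop := a1 = a2.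

Definition on_nearly_diagonal (R : realFieldType) (r : nat) (a1 a2 : R) : Prop :=
  r%:R * a1 = (r.+1)%:R * a2.

Definition simple_wall (r d : nat) (s e n1 n2 : int) : Prop :=
  gcdz (gcdz s e) (gcdz n1 n2) = 1%N /\
  gcdz (gcdz (r%:Z - s) (d%:Z - e)) (gcdz ((r.-1)%:Z - n1) (1 - n2)) = 1%N.

(* Main.v *)
Require Import Defs.
From HB Require Import structures.
From mathcomp Require Import all_boot all_order all_algebra.
From mathcomp Require Import zify ring lra.
Import Order.TTheory GRing.Theory Num.Theory.
Local Open Scope ring_scope.

Lemma gcd4_one (a b c d u v w x : int) :
  u * a + v * b + w * c + x * d = 1 -> gcdz (gcdz a b) (gcdz c d) = 1%N.
Proof.
move=> H.
set g := gcdz (gcdz a b) (gcdz c d).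
have ga : (g %| a)%Z by apply: dvdz_trans (dvdz_gcdl _ _) (dvdz_gcdl _ _).
have gb : (g %| b)%Z by apply: dvdz_trans (dvdz_gcdl _ _) (dvdz_gcdr _ _).
have gc : (g %| c)%Z by apply: dvdz_trans (dvdz_gcdr _ _) (dvdz_gcdl _ _).
have gd : (g %| d)%Z by apply: dvdz_trans (dvdz_gcdr _ _) (dvdz_gcdr _ _).
have : (g %| u * a + v * b + w * c + x * d)%Z by rewrite !rpredD ?dvdz_mull.
rewrite H.
rewrite /g /gcdz /dvdz /= => HH; apply/eqP; move: HH; rewrite unfold_in /= dvdn1 => /eqP -> //.
Qed.

Lemma intRnat (R : realFieldType) (n : nat) : (n%:Z)%:~R = n%:R :> R.
Proof. by []. Qed.

Theorem proposition3p1 (R : realFieldType) (r d : nat) (s e n1 n2 : int)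
    (a1 a2 : R) :
  (0 < d)%N -> (d < r)%N -> coprime r d ->
  wall_data r s n1 n2 ->
  weight a1 a2 ->
  on_diagonal a1 a2 \/ on_nearly_diagonal r a1 a2 ->
  on_wall r d s e n1 n2 a1 a2 ->
  simple_wall r d s e n1 n2.
Proof.
move=> d0 dr cop [/andP[s0 sr] /andP[n1l n1u] /andP[n20 n21]]
  [/andP[a10 a11] /andP[a20 a21]] path hw.
have r0 : (0 < r)%N by apply: leq_ltn_trans dr.
have hr1 : (r.-1)%:R = r%:R - 1 :> R.
  by rewrite -{2}(prednK r0) -addn1 natrD addrK.
have sR0 : s%:~R != 0 :> R by rewrite intr_eq0; lia.
have rR0 : r%:R != 0 :> R by rewrite pnatr_eq0; lia.
move: hw; rewrite /on_wall; move/eqP; rewrite eqr_div // hr1 => /eqP hw.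
have nodiag : e * r%:Z = s * d%:Z -> False.
  move=> E.
  have : (r%:Z %| s * d%:Z)%Z by rewrite -E dvdz_mull.
  rewrite Gauss_dvdzl; last by [].
  case/dvdzP => q Hq; have [q0|q1] : q <= 0 \/ 1 <= q by lia.
    have : q * r%:Z <= 0 by rewrite mulr_le0_ge0. lia.
  have : r%:Z <= q * r%:Z by rewrite ler_pMl //; lia. lia.
have Rr1 : (1 <= r%:R :> R) by rewrite ler1n.
have Rsr : s%:~R + 1 <= r%:R :> R.
  have : (s + 1)%:~R <= (r%:Z)%:~R :> R by rewrite ler_int; lia.
  by rewrite intrD.
have Rs1 : 1 <= s%:~R :> R.
  have : (1%:Z)%:~R <= s%:~R :> R by rewrite ler_int; lia.
  by [].
have nearx : on_nearly_diagonal r a1 a2 -> 0 < a1 - a2 /\ (r%:R + 1) * (a1 - a2) = a1.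
  rewrite /on_nearly_diagonal -addn1 natrD => H; split; nra.
have cast : (e * r%:Z - s * d%:Z)%:~R = e%:~R * r%:R - s%:~R * d%:R :> R.
  by rewrite intrB !intrM.
have excl : ~ (n1 = s /\ n2 = 0) /\ ~ (n1 = s - 1 /\ n2 = 1).
  split => -[E1 E2]; subst n1 n2.
  - have h : (e * r%:Z - s * d%:Z)%:~R = s%:~R * (a2 - a1) :> R.
      rewrite cast; move: hw; rewrite mul0r addr0 => hw.
      apply/eqP; rewrite -subr_eq0; apply/eqP.
      transitivity ((e%:~R + s%:~R * a1) * r%:R - (d%:R + (r%:R - 1) * a1 + a2) * s%:~R :> R).
        ring.
      by rewrite hw subrr.
    case: path => [D|N].
      rewrite /on_diagonal in D; subst a2.
      apply: nodiag; apply/eqP; rewrite -subr_eq0; apply/eqP.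
      by apply/eqP; rewrite -(intr_eq0 R) h subrr mulr0.
    have [x0 x1] := nearx N.
    have hl : (e * r%:Z - s * d%:Z)%:~R < 0 :> R by rewrite h; nra.
    have hg : (-1)%:~R < (e * r%:Z - s * d%:Z)%:~R :> R by rewrite h; nra.
    rewrite ltrz0 in hl; rewrite ltr_int in hg; lia.
  - have h : (e * r%:Z - s * d%:Z)%:~R = (r%:R - s%:~R) * (a1 - a2) :> R.
      rewrite cast; move: hw; rewrite mul1r intrB => hw.
      apply/eqP; rewrite -subr_eq0; apply/eqP.
      transitivity ((e%:~R + (s%:~R - 1%:~R) * a1 + a2) * r%:R - (d%:R + (r%:R - 1) * a1 + a2) * s%:~R :> R).
        ring.
      by rewrite hw subrr.
    case: path => [D|N].
      rewrite /on_diagonal in D; subst a2.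
      apply: nodiag; apply/eqP; rewrite -subr_eq0; apply/eqP.
      by apply/eqP; rewrite -(intr_eq0 R) h subrr mulr0.
    have [x0 x1] := nearx N.
    have hl : 0 < (e * r%:Z - s * d%:Z)%:~R :> R by rewrite h; nra.
    have hg : (e * r%:Z - s * d%:Z)%:~R < 1%:~R :> R by rewrite h; nra.
    rewrite ltr0z in hl; rewrite ltr_int in hg; lia.
case: excl => ex1 ex2.
have Hn1 : n1 = s - 1 \/ n1 = s by lia.
have Hn2 : n2 = 0 \/ n2 = 1 by lia.
split.
- case: Hn1 => E1.
    by apply: (@gcd4_one _ _ _ _ 1 0 (-1) 0); rewrite E1; ring.
  case: Hn2 => E2; first by exfalso; apply: ex1.
  by apply: (@gcd4_one _ _ _ _ 0 0 0 1); rewrite E2; ring.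
- case: Hn2 => E2.
    by apply: (@gcd4_one _ _ _ _ 0 0 0 1); rewrite E2; ring.
  case: Hn1 => E1; first by exfalso; apply: ex2.
  apply: (@gcd4_one _ _ _ _ 1 0 (-1) 0); rewrite E1.
  have -> : (r.-1)%:Z = r%:Z - 1 by rewrite -{2}(prednK r0) -addn1 PoszD addrK.
  ring.
Qed.
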